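(* Let $S$ be any scheduling rule. If there are p-SLD derivations $G\xrightarrow{S,E}F$ and $F\xrightarrow{S,H}Q$ via $S$, then there is a p-SLD derivation $G\xrightarrow{E}F\xrightarrow{H}R$ via $S$ (whose first part is the given derivation from $G$ to $F$) such that $R$ is a p-variant of $Q$.
   Context: A p-atom is a pair $a[p]$ of an atom $a$ and a rational priority $p$. A p-goal is a finite set of p-atoms with pairwise distinct priorities, regarded as a list ordered by increasing priority. Substitutions act on atoms and leave priorities unchanged. A clause is $h\leftarrow B$ with $h$ an atom and $B$ a p-goal. For p-goals with no common priority, $F+G=F\cup G$; $F|G$ denotes $F+G$ when all priorities of $F$ are smaller than those of $G$. A shifting is a strictly increasing bijection $\mathbb{Q}\to\mathbb{Q}$ acting on priorities. $F$ is a p-variant of $G$ if $F=G\lambda\underline{\sigma}$ for a renaming $\lambda$ and a shifting $\underline{\sigma}$. Priority derivation step: for a p-goal $a|F$ ($a$ of least priority), clause $c=(h\leftarrow B)$, renaming $\xi$ with $var(a|F)\cap var(c\xi)=\emptyset$, idempotent relevant mgu $\theta$ of $a$ and $h\xi$, shifting $\underline{\pi}$ with $F$, $B\xi\underline{\pi}$ sharing no priority: $a|F\xrightarrow{c\xi,\theta}(F+B\xi\underline{\pi})\theta$. A p-SLD derivation is a sequence of such steps with each renamed clause $c_j\xi_j$ variable-disjoint from the initial goal and all earlier renamed clauses; its template is the sequence of applied clauses. Lowering: for $c=(h\leftarrow B)$, a step $a\lambda\underline{\sigma}|(K\lambda\underline{\sigma}+X)\xrightarrow{c}(X+K\lambda\underline{\sigma}+B\xi''\underline{\theta}'')\alpha''$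 is a lowering by $X$ of $a|K\xrightarrow{c}(K+B\xi'\underline{\theta}')\alpha'$; a congruent lowering if some shifting $\underline{\rho}$ has $K\underline{\rho}=K\underline{\sigma}$ and $B\underline{\theta}'\underline{\rho}=B\underline{\theta}''$. Steps are (congruent) lowerings of each other if each is a (congruent) lowering of the other. A set $S$ of steps is deterministic if any two steps of $S$ that are lowerings of each other are congruent lowerings of each other; complete if (i) whenever some step $G\xrightarrow{c}\cdot$ exists, some step $G\xrightarrow{c}\cdot$ lies in $S$, and (ii) $S$ contains every step that is a congruent lowering of each other with a step of $S$. A scheduling rule is a complete deterministic set of steps; a derivation is via $S$ if all its steps lie in $S$, and $G\xrightarrow{S,M}R$ denotes such a derivation with template $M$. *)

(* Defs.v *)
From mathcomp Require Import all_boot all_order all_algebra.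
Set Implicit Arguments. Unset Strict Implicit. Unset Printing Implicit Defensive.
Import Order.TTheory GRing.Theory Num.Theory.

(* Variables are natural numbers; a function symbol is a name (nat) applied
   to a list of arguments (so a symbol is identified by name and arity). *)
Inductive term : Type :=
| Var : nat -> term
| Fn : nat -> seq term -> term.

Record atom : Type := Atom { apred : nat; aargs : seq term }.

Definition subst := nat -> term.

Fixpoint tsubst (s : subst) (t : term) : term :=
  match t with
  | Var x => s x
  | Fn f ts => Fn f (map (tsubst s) ts)
  end.

Definition asubst (s : subst) (a : atom) : atom :=
  Atom (apred a) (map (tsubst s) (aargs a)).

Fixpoint tvars (t : term) : seq nat :=
  match t with
  | Var x => [:: x]
  | Fn _ ts => flatten (map tvars ts)
  end.

Definition avars (a : atom) : seq nat := flatten (map tvars (aargs a)).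

Definition is_renaming (r : subst) : Prop :=
  exists f : nat -> nat, bijective f /\ forall x, r x = Var (f x).

Definition idempotent (th : subst) : Prop :=
  forall x, tsubst th (th x) = th x.

Definition unifier (th : subst) (a b : atom) : Prop := asubst th a = asubst th b.

Definition mgu (th : subst) (a b : atom) : Prop :=
  unifier th a b /\
  forall s, unifier s a b -> exists eta : subst, forall x, s x = tsubst eta (th x).

Definition relevant (th : subst) (a b : atom) : Prop :=
  forall x, th x <> Var x ->
    (x \in avars a ++ avars b) /\
    (forall y, y \in tvars (th x) -> y \in avars a ++ avars b).

(* a p-atom; p-goals are lists of p-atoms strictly sorted by priority
   (a finite set with pairwise distinct priorities, regarded as the list
   ordered by increasing priority). *)
Definition patom := (atom * rat)%type.
Definition pgoal := seq patom.

Definition prios (G : pgoal) : seq rat := map snd G.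

Definition pgoal_wf (G : pgoal) : Prop :=
  sorted (fun p q : rat => (p < q)%R) (prios G).

Definition no_common_prio (F G : pgoal) : Prop :=
  forall p, p \in prios F -> p \notin prios G.

Definition pg_plus (F G : pgoal) : pgoal :=
  sort (fun a b : patom => (a.2 <= b.2)%R) (F ++ G).

Definition pg_subst (s : subst) (G : pgoal) : pgoal :=
  map (fun pa : patom => (asubst s pa.1, pa.2)) G.

Definition is_shifting (pi : rat -> rat) : Prop :=
  (forall x y : rat, (x < y)%R -> (pi x < pi y)%R) /\ bijective pi.

Definition pg_shift (pi : rat -> rat) (G : pgoal) : pgoal :=
  map (fun pa : patom => (pa.1, pi pa.2)) G.

Definition pgvars (G : pgoal) : seq nat := flatten (map (fun pa : patom => avars pa.1) G).

Definition p_variant (F G : pgoal) : Prop :=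
  exists (lam : subst) (sg : rat -> rat),
    is_renaming lam /\ is_shifting sg /\ F = pg_shift sg (pg_subst lam G).

Record clause : Type := Clause { chead : atom; cbody : pgoal }.

Definition clause_wf (c : clause) : Prop := pgoal_wf (cbody c).

Definition csubst (s : subst) (c : clause) : clause :=
  Clause (asubst s (chead c)) (pg_subst s (cbody c)).

Definition cvars (c : clause) : seq nat := avars (chead c) ++ pgvars (cbody c).

(* A step  a|F --(c xi, theta)--> (F + B xi pi) theta,  recording the goal,
   the (unrenamed) clause c, the renaming xi, the mgu theta, the shifting pi
   and the resulting goal. *)
Record step : Type := Step {
  s_goal : pgoal;
  s_clause : clause;
  s_ren : subst;
  s_mgu : subst;
  s_shift : rat -> rat;
  s_res : pgoal }.

Definition is_step (st : step) : Prop :=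
  match s_goal st with
  | [::] => False
  | pa :: F =>
      let c := s_clause st in
      let xi := s_ren st in
      let th := s_mgu st in
      let pi := s_shift st in
      let Bxp := pg_shift pi (pg_subst xi (cbody c)) in
      pgoal_wf (pa :: F) /\ clause_wf c /\
      is_renaming xi /\
      (forall x, x \in pgvars (pa :: F) -> x \notin cvars (csubst xi c)) /\
      idempotent th /\ relevant th pa.1 (asubst xi (chead c)) /\
      mgu th pa.1 (asubst xi (chead c)) /\
      is_shifting pi /\ no_common_prio F Bxp /\
      s_res st = pg_subst th (pg_plus F Bxp)
  end.

Definition step_rvars (st : step) : seq nat := cvars (csubst (s_ren st) (s_clause st)).

(* s2 is a lowering by X of s1, witnessed by renaming lam and shifting sg:
   s1 : a|K --c--> ...,  s2 : (a lam sg) | (K lam sg + X) --c--> ... *)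
Definition lowering_by (lam : subst) (sg : rat -> rat) (X : pgoal)
    (s2 s1 : step) : Prop :=
  is_step s1 /\ is_step s2 /\ s_clause s2 = s_clause s1 /\
  is_renaming lam /\ is_shifting sg /\
  match s_goal s1 with
  | [::] => False
  | pa :: K =>
      let Kls := pg_shift sg (pg_subst lam K) in
      let al := (asubst lam pa.1, sg pa.2) in
      no_common_prio Kls X /\
      (forall p, p \in prios (Kls ++ X) -> (al.2 < p)%R) /\
      s_goal s2 = al :: pg_plus Kls X
  end.

Definition lowering (s2 s1 : step) : Prop :=
  exists lam sg X, lowering_by lam sg X s2 s1.

Definition congruent_lowering (s2 s1 : step) : Prop :=
  exists lam sg X, lowering_by lam sg X s2 s1 /\
    exists rho : rat -> rat, is_shifting rho /\
      pg_shift rho (behead (s_goal s1)) = pg_shift sg (behead (s_goal s1)) /\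
      pg_shift rho (pg_shift (s_shift s1) (cbody (s_clause s1)))
        = pg_shift (s_shift s2) (cbody (s_clause s2)).

Definition mutual_lowerings (s1 s2 : step) : Prop :=
  lowering s1 s2 /\ lowering s2 s1.

Definition mutual_congruent_lowerings (s1 s2 : step) : Prop :=
  congruent_lowering s1 s2 /\ congruent_lowering s2 s1.

Definition deterministic (S : step -> Prop) : Prop :=
  forall s1 s2, S s1 -> S s2 -> mutual_lowerings s1 s2 ->
    mutual_congruent_lowerings s1 s2.

Definition complete (S : step -> Prop) : Prop :=
  (forall (G : pgoal) (c : clause),
      (exists st, is_step st /\ s_goal st = G /\ s_clause st = c) ->
      exists st, S st /\ s_goal st = G /\ s_clause st = c) /\
  (forall s s', S s -> mutual_congruent_lowerings s' s -> S s').

Definition scheduling_rule (S : step -> Prop) : Prop :=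
  (forall st, S st -> is_step st) /\ deterministic S /\ complete S.

Fixpoint chain (G : pgoal) (ds : seq step) (R : pgoal) : Prop :=
  match ds with
  | [::] => G = R
  | st :: ds' => is_step st /\ s_goal st = G /\ chain (s_res st) ds' R
  end.

(* each renamed clause is variable-disjoint from the initial goal and all
   earlier renamed clauses (V accumulates these variables) *)
Fixpoint std_apart (V : seq nat) (ds : seq step) : Prop :=
  match ds with
  | [::] => True
  | st :: ds' =>
      (forall x, x \in step_rvars st -> x \notin V) /\
      std_apart (V ++ step_rvars st) ds'
  end.

Definition pSLD (G : pgoal) (ds : seq step) (R : pgoal) : Prop :=
  chain G ds R /\ std_apart (pgvars G) ds.

Definition template (ds : seq step) : seq clause := map s_clause ds.

Fixpoint all_steps_in (S : step -> Prop) (ds : seq step) : Prop :=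
  match ds with [::] => True | st :: ds' => S st /\ all_steps_in S ds' end.

Definition pSLD_via (S : step -> Prop) (G : pgoal) (ds : seq step) (R : pgoal) : Prop :=
  pSLD G ds R /\ all_steps_in S ds.

(* Main.v *)
Require Import Defs.
From mathcomp Require Import all_boot all_order all_algebra.
From mathcomp Require Import zify.
From Stdlib Require List.
Set Implicit Arguments. Unset Strict Implicit. Unset Printing Implicit Defensive.
Import Order.TTheory GRing.Theory Num.Theory.

Definition term_ind2 (P : term -> Prop) (HV : forall x, P (Var x))
  (HF : forall f ts, List.Forall P ts -> P (Fn f ts)) : forall t, P t :=
  fix IH t := match t with
  | Var x => HV x
  | Fn f ts => HF f ts ((fix G ts := match ts return List.Forall P ts with
        | nil => List.Forall_nil _
        | cons u us => List.Forall_cons _ (IH u) (G us) end) ts) end.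

Lemma tsubst_comp s r t : tsubst s (tsubst r t) = tsubst (fun x => tsubst s (r x)) t.
Proof.
elim/term_ind2: t => [x|f ts IH] //=; congr Fn; rewrite -map_comp.
by elim: IH => //= u us Hu _ IHs; rewrite Hu IHs.
Qed.

Lemma tsubst_ext_in s r t : (forall x, x \in tvars t -> s x = r x) -> tsubst s t = tsubst r t.
Proof.
elim/term_ind2: t => [x|f ts IH] /= H; first by apply: H; rewrite inE.
congr Fn; elim: IH H => //= u us Hu _ IHs H.
rewrite Hu ?IHs // => x Hx; apply: H; rewrite mem_cat Hx ?orbT //.
Qed.

Lemma tsubst_Var t : tsubst Var t = t.
Proof.
elim/term_ind2: t => [x|f ts IH] //=; congr Fn.
by elim: IH => //= u us -> _ ->.
Qed.

Definition Vk (k : nat -> nat) : subst := fun x => Var (k x).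

Lemma tvars_ren k t : tvars (tsubst (Vk k) t) = map k (tvars t).
Proof.
elim/term_ind2: t => [x|f ts IH] //=.
by elim: IH => //= u us -> _ ->; rewrite map_cat.
Qed.

Lemma asubst_comp s r a : asubst s (asubst r a) = asubst (fun x => tsubst s (r x)) a.
Proof. rewrite /asubst /= -map_comp; congr Atom; apply: eq_map => t /=; exact: tsubst_comp. Qed.

Lemma avars_ren k a : avars (asubst (Vk k) a) = map k (avars a).
Proof.
rewrite /avars /asubst /= map_flatten -map_comp -map_comp; congr flatten.
by apply: eq_map => t /=; rewrite tvars_ren.
Qed.

Lemma pg_subst_comp s r G : pg_subst s (pg_subst r G) = pg_subst (fun x => tsubst s (r x)) G.
Proof. rewrite /pg_subst -map_comp; apply: eq_map => pa /=; by rewrite asubst_comp. Qed.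

Lemma pgvars_ren k G : pgvars (pg_subst (Vk k) G) = map k (pgvars G).
Proof.
rewrite /pgvars /pg_subst map_flatten -map_comp -map_comp; congr flatten.
by apply: eq_map => pa /=; rewrite avars_ren.
Qed.

Lemma prios_subst s G : prios (pg_subst s G) = prios G.
Proof. by rewrite /prios /pg_subst -map_comp. Qed.

Lemma pg_subst_shift s pi G : pg_subst s (pg_shift pi G) = pg_shift pi (pg_subst s G).
Proof. by rewrite /pg_subst /pg_shift -!map_comp. Qed.

Lemma pg_subst_plus s F G : pg_subst s (pg_plus F G) = pg_plus (pg_subst s F) (pg_subst s G).
Proof. by rewrite /pg_plus /pg_subst -map_cat sort_map. Qed.

Lemma pg_shift_id G : pg_shift id G = G.
Proof. by rewrite /pg_shift; elim: G => //= [[a p] G] ->. Qed.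

Lemma tsubst_invol k t : cancel k k -> tsubst (Vk k) (tsubst (Vk k) t) = t.
Proof.
move=> kK; rewrite tsubst_comp -[RHS]tsubst_Var; apply: tsubst_ext_in => x _.
by rewrite /Vk /= kK.
Qed.

Lemma asubst_invol k a : cancel k k -> asubst (Vk k) (asubst (Vk k) a) = a.
Proof.
move=> kK; rewrite asubst_comp; case: a => p ts; rewrite /asubst /=; congr Atom.
elim: ts => //= t ts ->; congr cons; rewrite -[RHS]tsubst_Var; apply: tsubst_ext_in => x _.
by rewrite /Vk /= kK.
Qed.

Lemma pg_subst_invol k G : cancel k k -> pg_subst (Vk k) (pg_subst (Vk k) G) = G.
Proof.
move=> kK; rewrite /pg_subst -map_comp; elim: G => //= [[a p] G] ->.
by rewrite /= asubst_invol.
Qed.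

Definition cstep k st := Step (pg_subst (Vk k) (s_goal st)) (s_clause st)
  (fun x => tsubst (Vk k) (s_ren st x)) (fun x => tsubst (Vk k) (s_mgu st (k x)))
  (s_shift st) (pg_subst (Vk k) (s_res st)).

Lemma csubst_comp k xi c : csubst (fun x => tsubst (Vk k) (xi x)) c = csubst (Vk k) (csubst xi c).
Proof. by rewrite /csubst /= asubst_comp pg_subst_comp. Qed.

Lemma cvars_ren k c : cvars (csubst (Vk k) c) = map k (cvars c).
Proof. by rewrite /cvars /= avars_ren pgvars_ren map_cat. Qed.

Lemma tsubst_ext s r t : (forall x, s x = r x) -> tsubst s t = tsubst r t.
Proof. by move=> H; apply: tsubst_ext_in => x _. Qed.

Lemma asubst_ext s r a : (forall x, s x = r x) -> asubst s a = asubst r a.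
Proof. by move=> H; rewrite /asubst; congr Atom; apply: eq_map => t; apply: tsubst_ext. Qed.

Lemma pg_subst_ext s r G : (forall x, s x = r x) -> pg_subst s G = pg_subst r G.
Proof. by move=> H; rewrite /pg_subst; apply: eq_map => pa; rewrite (asubst_ext _ H). Qed.

Section Conj.
Variable k : nat -> nat.
Hypothesis kK : cancel k k.
Variable th : subst.
Let th' := fun x => tsubst (Vk k) (th (k x)).

Lemma conj_ext x : tsubst th' (Vk k x) = tsubst (Vk k) (th x).
Proof. by rewrite /th' /Vk /= kK. Qed.

Lemma conj_t u : tsubst th' (tsubst (Vk k) u) = tsubst (Vk k) (tsubst th u).
Proof. by rewrite !tsubst_comp; apply: tsubst_ext => x; rewrite conj_ext. Qed.

Lemma conj_a u : asubst th' (asubst (Vk k) u) = asubst (Vk k) (asubst th u).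
Proof. by rewrite !asubst_comp; apply: asubst_ext => x; rewrite conj_ext. Qed.

Lemma conj_pg u : pg_subst th' (pg_subst (Vk k) u) = pg_subst (Vk k) (pg_subst th u).
Proof. by rewrite !pg_subst_comp; apply: pg_subst_ext => x; rewrite conj_ext. Qed.
End Conj.

Lemma tsubst_Vk_inj k : cancel k k -> injective (tsubst (Vk k)).
Proof. by move=> kK u v H; rewrite -(tsubst_invol u kK) -(tsubst_invol v kK) H. Qed.

Lemma asubst_Vk_inj k : cancel k k -> injective (asubst (Vk k)).
Proof. by move=> kK u v H; rewrite -(asubst_invol u kK) -(asubst_invol v kK) H. Qed.

Lemma is_step_cstep k st : cancel k k -> is_step st -> is_step (cstep k st).
Proof.
move=> kK; have kI := can_inj kK.
case: st => [[|[a p] F] c xi th pi R] //.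
rewrite /is_step /cstep /=.
move=> [wf [cwf [ren [disj [idem [rel [[un mg] [sh [nc ->]]]]]]]]].
rewrite -asubst_comp -pg_subst_comp.
set h := asubst xi (chead c).
set th' := fun x => tsubst (Vk k) (th (k x)).
split.
  by move: wf; rewrite /pgoal_wf /prios /= -map_comp.
split=> //.
split.
  case: ren => f [fb fE]; exists (k \o f); split.
    by apply: bij_comp => //; exists k.
  by move=> x; rewrite fE.
split.
  move=> x; rewrite csubst_comp cvars_ren.
  change (x \in pgvars (pg_subst (Vk k) ((a, p) :: F)) -> x \notin map k (cvars (csubst xi c))).
  rewrite pgvars_ren => /mapP [y Hy ->]; rewrite mem_map //; exact: disj.
split.
  by move=> x; rewrite /th' (conj_t kK) (idem (k x)).
split.
  move=> x Hx.
  have Hx' : th (k x) <> Var (k x).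
    by move=> E; apply: Hx; rewrite /th' E /Vk /= kK.
  have [H1 H2] := rel _ Hx'.
  rewrite !avars_ren -map_cat; split.
    by rewrite -[x]kK mem_map.
  move=> y; rewrite /th' tvars_ren => /mapP [z Hz ->]; rewrite mem_map //; exact: H2.
split.
  split.
    by rewrite /unifier /th' !(conj_a kK) un.
  move=> s Hs.
  have Hs' : unifier (fun y => s (k y)) a h.
    move: Hs; rewrite /unifier !asubst_comp.
    have E : forall u, asubst (fun x => tsubst s (Vk k x)) u = asubst (fun y => s (k y)) u.
      by move=> u; apply: asubst_ext.
    by rewrite !E.
  have [eta Heta] := mg _ Hs'.
  exists (fun z => eta (k z)) => x.
  rewrite /th' tsubst_comp -{1}(kK x) Heta; apply: tsubst_ext => z; by rewrite /Vk /= kK.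
split=> //.
rewrite -pg_subst_shift; split.
  by rewrite /no_common_prio !prios_subst.
by rewrite -pg_subst_plus /th' (conj_pg kK).
Qed.

Lemma is_shifting_id : is_shifting id.
Proof. by split=> //; exists id. Qed.

Lemma is_renaming_Vk k : cancel k k -> is_renaming (Vk k).
Proof. by move=> kK; exists k; split=> //; exists k. Qed.

Lemma cong_low k s1 s2 : cancel k k -> is_step s1 -> is_step s2 ->
  s_clause s2 = s_clause s1 -> s_shift s2 = s_shift s1 ->
  s_goal s2 = pg_subst (Vk k) (s_goal s1) -> congruent_lowering s2 s1.
Proof.
move=> kK h1 h2 ec es eg.
exists (Vk k), id, [::]; split; last first.
  exists id; split; first exact: is_shifting_id.
  rewrite es ec !pg_shift_id. split; reflexivity.
split=> //; split=> //; split=> //.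
split; first exact: is_renaming_Vk.
split; first exact: is_shifting_id.
move: h1 eg; rewrite /is_step; case: (s_goal s1) => [|[a p] K] //= [wf _] ->.
rewrite pg_shift_id /pg_plus cats0.
have sK : sorted (fun x y : rat => (x < y)%R) (prios (pg_subst (Vk k) K)).
  by rewrite prios_subst; exact: (path_sorted wf).
split; first by move=> q.
split.
  move=> q; rewrite prios_subst.
  have := order_path_min (@lt_trans _ rat) wf.
  by move/allP => H /H.
rewrite sorted_sort //.
  by move=> x y z; apply: le_trans.
move: sK; rewrite /prios sorted_map => H; apply: sub_sorted H => x y /=; exact: ltW.
Qed.

Lemma mcl_cstep k st : cancel k k -> is_step st ->
  mutual_congruent_lowerings (cstep k st) st.
Proof.
move=> kK h; have h' := is_step_cstep kK h; split.
  exact: (cong_low kK).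
apply: (cong_low kK) => //=; by rewrite pg_subst_invol.
Qed.

Lemma chain_cstep k G ds R : cancel k k -> chain G ds R ->
  chain (pg_subst (Vk k) G) (map (cstep k) ds) (pg_subst (Vk k) R).
Proof.
move=> kK; elim: ds G => [|st ds IH] G /=; first by move->.
move=> [h [<- hc]]; split; first exact: is_step_cstep.
by split=> //; apply: IH.
Qed.

Lemma steps_cstep S k ds : cancel k k -> scheduling_rule S -> all_steps_in S ds ->
  all_steps_in S (map (cstep k) ds).
Proof.
move=> kK [hS [_ [_ hc]]]; elim: ds => //= st ds IH [h1 h2]; split; last exact: IH.
by apply: (hc st) => //; apply: mcl_cstep => //; apply: hS.
Qed.

Lemma rvars_cstep k st : step_rvars (cstep k st) = map k (step_rvars st).
Proof. by rewrite /step_rvars /= csubst_comp cvars_ren. Qed.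

Lemma std_apart_cstep k ds V V' : cancel k k -> std_apart V ds ->
  (forall x, x \in flatten (map step_rvars ds) -> x \notin V -> k x \notin V') ->
  std_apart V' (map (cstep k) ds).
Proof.
move=> kK; have kI := can_inj kK.
elim: ds V V' => //= st ds IH V V' [h1 h2] H; split.
  move=> y; rewrite rvars_cstep => /mapP [x Hx ->]; apply: H; first by rewrite mem_cat Hx.
  exact: h1.
rewrite rvars_cstep; apply: (IH (V ++ step_rvars st)) => // x Hx; rewrite mem_cat negb_or => /andP [nV nr].
rewrite mem_cat negb_or mem_map // nr andbT; apply: H nV; by rewrite mem_cat Hx orbT.
Qed.

Lemma chain_cat G a F b R : chain G a F -> chain F b R -> chain G (a ++ b) R.
Proof.
elim: a G => [|st a IH] G /=; first by move->.
by move=> [h [e c]] c2; split=> //; split=> //; apply: IH.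
Qed.

Lemma std_apart_cat V a b : std_apart V a ->
  std_apart (V ++ flatten (map step_rvars a)) b -> std_apart V (a ++ b).
Proof.
elim: a V => [|st a IH] V /=; first by rewrite cats0.
by move=> [h1 h2] h3; split=> //; apply: IH => //; rewrite -catA.
Qed.

Lemma steps_cat S a b : all_steps_in S a -> all_steps_in S b -> all_steps_in S (a ++ b).
Proof. by elim: a => //= st a IH [h1 h2] h3; split=> //; apply: IH. Qed.

Lemma pg_subst_fix k G : (forall x, x \in pgvars G -> k x = x) -> pg_subst (Vk k) G = G.
Proof.
elim: G => //= [[[q ts] p] G] IH H; rewrite IH; last first.
  by move=> x Hx; apply: H; rewrite /pgvars /= mem_cat Hx orbT.
congr cons; rewrite /asubst /=; congr (Atom _ _, _).
have H' : forall x, x \in flatten (map tvars ts) -> k x = x.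
  by move=> x Hx; apply: H; rewrite /pgvars /= mem_cat /avars /= Hx.
elim: ts H' {H} => //= t ts IHt H'; rewrite IHt; last first.
  by move=> x Hx; apply: H'; rewrite mem_cat Hx orbT.
congr cons; rewrite -[RHS]tsubst_Var; apply: tsubst_ext_in => x Hx.
by rewrite /Vk H' // mem_cat Hx.
Qed.

Lemma template_cstep k ds : template (map (cstep k) ds) = template ds.
Proof. by rewrite /template -map_comp. Qed.

Lemma leq_foldmax x s : x \in s -> x <= foldr maxn 0 s.
Proof. elim: s => //= y s IH; rewrite inE => /orP [/eqP ->|/IH]; lia. Qed.

Theorem mainTheorem9 (S : step -> Prop) (G F Q : pgoal)
    (dE dH : seq step) (E H : seq clause) :
  scheduling_rule S -> pgoal_wf G ->
  pSLD_via S G dE F -> template dE = E ->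
  pSLD_via S F dH Q -> template dH = H ->
  exists (dH' : seq step) (R : pgoal),
    pSLD_via S G (dE ++ dH') R /\ template dH' = H /\ p_variant R Q.
Proof.
move=> hS _ [[cE aE] sE] _ [[cH aH] sH] <-.
set W := flatten (map step_rvars dH).
set VF := pgvars F.
set V' := pgvars G ++ flatten (map step_rvars dE).
set N := (foldr maxn 0 (W ++ VF ++ V')).+1.
set D := [seq x <- W | x \notin VF].
have ltN : forall x, x \in W ++ VF ++ V' -> x < N.
  by move=> x /leq_foldmax; rewrite /N ltnS.
have DN : forall x, x \in D -> x < N.
  by move=> x; rewrite mem_filter => /andP [_ Hx]; apply: ltN; rewrite mem_cat Hx.
pose k y := if y \in D then y + N else if (N <= y) && (y - N \in D) then y - N else y.
have kK : cancel k k.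
  move=> y.
  have k1 : forall z, z \in D -> k z = z + N by move=> z zD; rewrite /k zD.
  have k2 : forall z, z \notin D -> N <= z -> z - N \in D -> k z = z - N.
    by move=> z zD zN zND; rewrite /k (negbTE zD) zN zND.
  have k3 : forall z, z \notin D -> ~~ ((N <= z) && (z - N \in D)) -> k z = z.
    by move=> z zD zz; rewrite /k (negbTE zD) (negbTE zz).
  have nD : forall z, N <= z -> z \notin D by move=> z zN; apply/negP => /DN; lia.
  case: (boolP (y \in D)) => yD.
    have yN := DN _ yD.
    rewrite (k1 _ yD) (k2 (y + N)) ?addnK ?leq_addl //; by apply: nD; rewrite leq_addl.
  case: (boolP ((N <= y) && (y - N \in D))) => [/andP [Ny yND]|yn].
    by rewrite (k2 _ yD Ny yND) k1 // subnK.
  by rewrite !(k3 _ yD yn).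
have kfix : forall x, x \in VF -> k x = x.
  move=> x xF; rewrite /k /D mem_filter (_ : (x \notin VF) = false) /=; last by apply/negbF.
  have : x < N by apply: ltN; rewrite !mem_cat xF orbT.
  by case: leqP.
exists (map (cstep k) dH), (pg_subst (Vk k) Q).
split; last split.
- split; last by apply: steps_cat => //; apply: steps_cstep.
  split.
    apply: chain_cat cE _; rewrite -{1}(pg_subst_fix kfix); exact: chain_cstep.
  apply: std_apart_cat => //; apply: (std_apart_cstep kK aH) => // x xW xF.
  have xD : x \in D by rewrite mem_filter xF.
  rewrite /k xD; apply/negP => HV.
  have : x < N by apply: DN.
  have : x + N \in W ++ VF ++ V' by rewrite mem_cat; apply/orP; right; rewrite mem_cat; apply/orP; right; exact: HV.
  move/ltN; lia.
- exact: template_cstep.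
- exists (Vk k), id; split; first exact: is_renaming_Vk.
  split; first exact: is_shifting_id.
  by rewrite pg_shift_id.
Qed.
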